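(* (Root Capacity Magnification Theorem.) Let $K$ be a perfect field and let $K\subseteq L\subseteq M$ be finite extensions inside $\bar K$. Let $F/K$ be a finite Galois extension of degree $d$ such that $M'=MF$ is obtained by strong cluster magnification from $M/K$ through $F/K$ and $L'=LF$ is obtained by strong cluster magnification from $L/K$ through $F/K$. Then $\rho_K(M',L')=d\cdot\rho_K(M,L)$.
   Context: $\bar K$ is a fixed algebraic closure of $K$; $\tilde E$ denotes the Galois closure in $\bar K$ of a finite extension $E/K$. A finite extension $M/K$ is obtained by strong cluster magnification from a subextension $L/K$ through a finite Galois extension $F/K$ if $[L:K]>2$, $\tilde L\cap F=K$, and $LF=M$; $d=[F:K]$ is the magnification factor. For finite extensions $L/K$, $M/K$, writing $L=K(\alpha)$ with minimal polynomial $f$ of $\alpha$ over $K$, the root capacity $\rho_K(M,L)$ is the number of roots of $f$ lying in $M$ (independent of the choice of $\alpha$); equivalently $\rho_K(M,L)=a\cdot r_K(L)$, where $a$ is the number of distinct subfields of $M$ isomorphic to $L$ over $K$ and $r_K(L)$ is the number of roots of $f$ in $L$. *)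

(* Defs.v *)
From HB Require Import structures.
From mathcomp Require Import all_boot all_order all_algebra all_fingroup all_field.
Set Implicit Arguments. Unset Strict Implicit. Unset Printing Implicit Defensive.
Import GRing.Theory.
Local Open Scope ring_scope.

Definition perfect_field (K : fieldType) : Prop :=
  [pchar K] =i pred0 \/
  exists2 p : nat, p \in [pchar K] & forall x : K, exists y : K, y ^+ p = x.

Section Ambient.
Variables (K : fieldType) (Om : splittingFieldType K).

(* Galois (= normal, K being perfect) closure of E over K inside the ambient
   normal extension Om: the subfield generated by all K-conjugates of E. *)
Definition galClosure (E : {vspace Om}) : {aspace Om} :=
  << \sum_(s in galoisG {:Om} 1%VS) (s @: E) >>%AS.

Definition nroots_in (M : {vspace Om}) (p : {poly Om}) (n : nat) : Prop :=
  exists s : seq Om, [/\ uniq s, size s = n &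
                      forall y, (y \in s) = (y \in M) && root p y].

(* [root_capacity M L n] : rho_K(M, L) = n, i.e. for a primitive element
   alpha of L/K, the minimal polynomial of alpha over K has n roots in M.
   (This number is independent of the choice of alpha.) *)
Definition root_capacity (M L : {vspace Om}) (n : nat) : Prop :=
  exists alpha : Om, L = <<1%VS; alpha>>%VS /\ nroots_in M (minPoly 1%VS alpha) n.

Definition strong_cluster_magnification (E F M' : {vspace Om}) : Prop :=
  [/\ (2 < \dim E)%N, galois 1%VS F,
      (galClosure E :&: F)%VS = 1%VS & M' = (E * F)%VS].
End Ambient.

(* Main.v *)
Require Import Defs.
From HB Require Import structures.
From mathcomp Require Import all_boot all_order all_algebra all_fingroup all_field.
From mathcomp Require Import ring.
Set Implicit Arguments. Unset Strict Implicit. Unset Printing Implicit Defensive.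
Import GRing.Theory.
Local Open Scope ring_scope.
Lemma fiber_count (T : finType) (U : eqType) (f : T -> U) (A : {set T}) k :
  (forall x, x \in A -> #|[set y in A | f y == f x]| = k) ->
  #|A| = (k * size (undup (map f (enum A))))%N.
Proof.
move=> Hk; set u := undup _.
have -> : #|A| = \sum_(v <- u) #|[set y in A | f y == v]|.
  transitivity (\sum_(v <- u) \sum_(y in A) (f y == v : nat)).
    rewrite exchange_big /= -sum1_card; apply: eq_bigr => y yA.
    have -> : \sum_(v <- u) (f y == v : nat) = count (pred1 (f y)) u.
      rewrite -sum1_count [RHS]big_mkcond /=; apply: eq_bigr => v _.
      by rewrite eq_sym; case: (_ == _).
    rewrite count_uniq_mem ?undup_uniq // mem_undup map_f //.
    by rewrite mem_enum.
  apply: eq_bigr => v _; rewrite -sum1dep_card big_mkcondr /=.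
  by apply: eq_bigr => y _; case: (_ == _).
rewrite -sum1_size big_distrr /=; apply: eq_big_seq => v.
rewrite mem_undup => /mapP [x]; rewrite mem_enum => xA ->.
by rewrite Hk // muln1.
Qed.
Section Perf.
Variables (K : fieldType) (Om : splittingFieldType K).

Lemma perfect_sep (x : Om) : perfect_field K -> separable_element 1%VS x.
Proof.
case=> [ch0 | [q chq Hq]].
  by apply: pcharf0_separable => p; rewrite (pchar_lalg Om) ch0.
apply/negPn/negP => /separablePn_pchar [p chp [g Kg Hmin]].
have chpK : p \in [pchar K] by rewrite -(pchar_lalg Om).
have epq : q = p by move: (pcharf_eq chpK q); rewrite chq => /esym/eqP.
subst q.
have Hq' : forall c : K, exists y : K, y ^+ p == c.
  by move=> c; have [y Hy] := Hq c; exists y; rewrite Hy.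
pose r (c : K) := xchoose (Hq' c).
have rP c : r c ^+ p = c by apply/eqP; exact: (xchooseP (Hq' c)).
have /polyOver1P [g0 Dg] := Kg.
pose h : {poly Om} := \poly_(i < size g) (r (g0`_i))%:A.
have pr_p := pcharf_prime chp.
have p_gt1 := prime_gt1 pr_p.
have p_gt0 := prime_gt0 pr_p.
have Dgi i : g`_i = (g0`_i)%:A by rewrite Dg coef_map.
have hK : h \is a polyOver 1%VS.
  by apply/polyOverP => i; rewrite coef_poly; case: ifP => _; rewrite ?rpred0 // rpredZ ?mem1v.
have szh : (size h <= size g)%N by apply: size_poly.
have hx : h.[x] = 0.
  have : (minPoly 1%VS x).[x] = 0 by apply: minPolyxx.
  rewrite Hmin horner_comp hornerXn horner_coef (horner_coef_wide _ szh).

  have -> : \sum_(i < size g) g`_i * (x ^+ p) ^+ i = pFrobenius_aut chp (\sum_(i < size g) h`_i * x ^+ i).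
    rewrite rmorph_sum; apply: eq_bigr => i _.
    rewrite rmorphM rmorphXn /= !pFrobenius_autE coef_poly ltn_ord exprAC.
    by rewrite Dgi -{1}(rP (g0`_i)) exprZn expr1n.
  by move/eqP; rewrite fmorph_eq0 => /eqP.
have nzg : g != 0.
  by apply: contraTneq (monic_minPoly 1%VS x) => g0'; rewrite Hmin g0' comp_poly0 monicE lead_coef0 eq_sym oner_eq0.
have nzh : h != 0.
  have : h`_(size g).-1 != 0.
    rewrite coef_poly prednK ?size_poly_gt0 // leqnn scaler_eq0 oner_eq0 orbF.
    apply/eqP => rz; move/negP: nzg; apply.
    rewrite -lead_coef_eq0 lead_coefE Dgi -(rP (g0`_(size g).-1)) rz expr0n.
    by rewrite (gtn_eqF p_gt0) scale0r.
  by apply: contraNneq => ->; rewrite coef0.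
have rh : root h x by apply/rootP.
have := dvdp_leq nzh (minPoly_dvdp hK rh).
have S2 : (1 < size (minPoly 1%VS x))%N by rewrite size_minPoly.
have S1 := size_comp_poly g ('X^p : {poly Om}).
rewrite -Hmin size_polyXn /= in S1.
move=> Sh; have Sm := leq_trans Sh szh.
have S0 : (0 < size (minPoly 1%VS x))%N by apply: ltnW.
move: S2 Sm; rewrite -(prednK S0) S1.
case: (size g) => [|m] //=; rewrite !ltnS => H1 H2.
have : (m * p <= m * 1)%N by rewrite muln1.
rewrite leq_pmul2l; first by rewrite leqNgt p_gt1.
by case: m H1 {H2} => //; rewrite mul0n.
Qed.

Lemma galOm : perfect_field K -> galois 1%VS {:Om}.
Proof.
move=> pf; rewrite /galois subvf normalFieldf andbT.
by apply/separableP => y _; apply: perfect_sep.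
Qed.
End Perf.
Section Gal.
Variables (K : fieldType) (Om : splittingFieldType K).

Lemma allG (s : gal_of {:Om}) : s \in 'Gal({:Om} / 1%AS)%g.
Proof. by rewrite gal_kHom ?sub1v // k1AHom. Qed.

Lemma stab_gal (x : Om) (r : gal_of {:Om}) :
  (r x == x) = (r \in 'Gal({:Om} / <<1; x>>%AS)%g).
Proof.
apply/idP/idP => [/eqP rx | rG]; last first.
  by apply/eqP; apply: (fixed_gal (subvf _) rG); apply: memv_adjoin.
have : [set r] \subset 'Gal({:Om} / <<1; x>>%AS)%g.
  rewrite galois_connection ?subvf //; apply/FadjoinP; split; first exact: sub1v.
  by apply/fixedFieldP; [exact: memvf | move=> y /set1P ->].
by rewrite sub1set.
Qed.

Lemma fiber_gal (x : Om) (s t : gal_of {:Om}) :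
  (t x == s x) = (t \in ('Gal({:Om} / <<1; x>>%AS) :* s)%g).
Proof.
rewrite mem_rcoset -stab_gal galM ?memvf //.
have K1 y : (s^-1)%g (s y) = y by rewrite -galM ?memvf // mulgV gal_id.
have K2 y : s ((s^-1)%g y) = y by rewrite -galM ?memvf // mulVg gal_id.
by rewrite -[X in _ = (_ == X)](K1 x) (inj_eq (can_inj K2)).
Qed.

Lemma gal_normal_in (F : {subfield Om}) (s : gal_of {:Om}) :
  galois 1%VS F -> (s @: F <= F)%VS.
Proof.
case/and3P => _ _ /normalFieldP nF.
apply/subvP => _ /memv_imgP [y yF ->].
have [r /allP rF Dm] := nF y yF.
apply: rF; rewrite -root_prod_XsubC -Dm.
by apply: root_minPoly_gal; rewrite ?subvf ?memvf ?allG.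
Qed.

Lemma img_adjoin1 (s : gal_of {:Om}) (x : Om) :
  (s @: <<1; x>> = <<1; s x>>)%VS.
Proof. by rewrite aimg_adjoin aimg1. Qed.

Lemma mem_closure (E : {vspace Om}) (s : gal_of {:Om}) y :
  y \in E -> s y \in galClosure E.
Proof.
move=> yE; rewrite /galClosure /=.
apply: (subvP (sub_agenv _)); apply: (subvP (sumv_sup s _ _)); first exact: allG.
  exact: subvv.
exact: memv_img.
Qed.

End Gal.
Section NI.
Variables (K : fieldType) (Om : splittingFieldType K).
Hypothesis galO : galois 1%VS {:Om}.

Lemma cardGal (X : {subfield Om}) : (#|'Gal({:Om} / X)%g| * \dim X = \dim {:Om})%N.
Proof.
have gX : galois X {:Om} by apply: galoisS galO; rewrite sub1v subvf.
by rewrite -galois_dim // divnK // field_dimS // subvf.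
Qed.

Lemma galM_prod (E F : {subfield Om}) :
  'Gal({:Om} / (E * F)%AS)%g = ('Gal({:Om} / E) :&: 'Gal({:Om} / F))%g.
Proof.
apply/eqP; rewrite eqEsubset subsetI !galS ?field_subvMr ?field_subvMl //=.
rewrite galois_connection ?subvf //.
by apply: prodv_sub; rewrite -galois_connection ?subvf // ?subsetIl ?subsetIr.
Qed.

Lemma galM_cap (E F : {subfield Om}) : galois 1%VS F ->
  'Gal({:Om} / (E :&: F)%AS)%g = ('Gal({:Om} / E) <*> 'Gal({:Om} / F))%g.
Proof.
move=> gF.
apply/eqP; rewrite eqEsubset join_subG !galS ?capvSl ?capvSr //= andbT.
set J := ('Gal({:Om} / E) <*> 'Gal({:Om} / F))%G.
suff sJ : (fixedField J <= E :&: F)%VS.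
  by have := galS {:Om} sJ; rewrite gal_fixedField.
have gE : galois E {:Om} by apply: galoisS galO; rewrite sub1v subvf.
have gF' : galois F {:Om} by apply: galoisS galO; rewrite sub1v subvf.
rewrite subv_cap; apply/andP; split.
  have /galois_fixedField fE := gE; rewrite -[X in (_ <= X)%VS]fE.
  by apply: fixedFieldS; apply: joing_subl.
have /galois_fixedField fF := gF'; rewrite -[X in (_ <= X)%VS]fF.
by apply: fixedFieldS; apply: joing_subr.
Qed.

Lemma NI (E F : {subfield Om}) : galois 1%VS F ->
  (\dim (E * F) * \dim (E :&: F) = \dim E * \dim F)%N.
Proof.
move=> gF.
have nF : ('Gal({:Om} / F) <| 'Gal({:Om} / 1%AS))%g.
  by apply: normalField_normal; [rewrite sub1v subvf | case/and3P: gF].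
have nEF : 'Gal({:Om} / E)%g \subset 'N('Gal({:Om} / F))%g.
  exact: subset_trans (galS _ (sub1v E)) (normal_norm nF).
have Hc := mul_cardG 'Gal({:Om} / E)%G 'Gal({:Om} / F)%G.
rewrite -(norm_joinEl nEF) -galM_cap // -galM_prod in Hc.
have cE := cardGal E; have cF := cardGal F.
have cC := cardGal (E :&: F)%AS; have cP := cardGal (E * F)%AS.
set a := #|_| in cE Hc; set b := #|_| in cF Hc.
set c := #|_| in cC Hc; set e := #|_| in cP Hc.
have ce_gt0 : (0 < c * e)%N by rewrite muln_gt0 !cardG_gt0.
apply/eqP; rewrite -(eqn_pmul2l ce_gt0).
have -> : (c * e * (\dim (E * F) * \dim (E :&: F)) = \dim {:Om} * \dim {:Om})%N.
  by rewrite -{1}cC -cP /=; ring.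
by rewrite -Hc -{1}cE -cF /=; apply/eqP; ring.
Qed.
End NI.

Section Main.
Variables (K : fieldType) (Om : splittingFieldType K).
Hypothesis galO : galois 1%VS {:Om}.

Lemma sub_closure (M : {subfield Om}) : (M <= galClosure M)%VS.
Proof.
by apply/subvP => y yM; have := mem_closure 1%g yM; rewrite gal_id.
Qed.

Lemma disj (M F : {subfield Om}) : galois 1%VS F ->
  (galClosure M :&: F)%VS = 1%VS ->
  forall b, b \in galClosure M -> b \in (M * F)%VS -> b \in M.
Proof.
move=> gF capM b bC bMF.
pose E := <<M; b>>%AS.
have sME : (M <= E)%VS := subv_adjoin M b.
have sEC : (E <= galClosure M)%VS by apply/FadjoinP; split=> //; apply: sub_closure.
have sEMF : (E <= M * F)%VS by apply/FadjoinP; split=> //; apply: field_subvMr.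
have capE : (E :&: F)%VS = 1%VS.
  apply/eqP; rewrite eqEsubv; apply/andP; split; last exact: (sub1v (E :&: F)%AS).
  by rewrite -capM; exact: capvS sEC (subvv F).
have capM' : (M :&: F)%VS = 1%VS.
  apply/eqP; rewrite eqEsubv; apply/andP; split; last exact: (sub1v (M :&: F)%AS).
  by rewrite -capM; exact: capvS (sub_closure M) (subvv F).
have EF : (E * F)%VS = (M * F)%VS.
  apply/eqP; rewrite eqEsubv; apply/andP; split; last exact: prodvSl.
  by apply: (prodv_sub (A := (M * F)%AS)) => //; apply: field_subvMl.
have := NI galO E gF; have := NI galO M gF.
rewrite capE capM' EF dimv1 !muln1 => -> /eqP.
rewrite eqn_pmul2r ?adim_gt0 // => /eqP dEM.
have /eqP -> : (M == E :> {vspace Om}) by rewrite eqEdim sME dEM leqnn.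
exact: memv_adjoin.
Qed.

End Main.

Theorem mainTheorem5 (K : fieldType) (Om : splittingFieldType K)
    (L M F : {subfield Om}) :
  perfect_field K ->
  (L <= M)%VS ->
  galois 1%VS F ->
  strong_cluster_magnification M F (M * F)%VS ->
  strong_cluster_magnification L F (L * F)%VS ->
  forall n : nat, root_capacity M L n ->
  root_capacity (M * F)%VS (L * F)%VS (\dim F * n).
Proof.
move=> pf sLM gF [_ _ capM _] _ n [alpha [DL [s [us ss Hs]]]].
have galO := galOm Om pf.
have sepO : separable 1%VS {:Om} by case/and3P: galO.
have sepLF : separable 1%VS (L * F)%AS := separableSr (subvf _) sepO.
have DLF := eq_adjoin_separable_generator sepLF (sub1v (L * F)%AS).
set gamma := separable_generator 1%VS (L * F)%AS in DLF.
have DLF' : (L * F)%VS = <<1; gamma>>%VS := DLF.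
exists gamma; split; first exact: DLF'.
have alM : alpha \in M by apply: (subvP sLM); rewrite DL memv_adjoin.
have key (t : gal_of {:Om}) : (t gamma \in (M * F)%VS) = (t alpha \in M).
  apply/idP/idP => H.
    apply: (disj galO gF capM); first exact: mem_closure.
    have : (t @: L <= M * F)%VS.
      apply: subv_trans (limgS _ (field_subvMr L F)) _.
      rewrite DLF' img_adjoin1; apply/FadjoinP; split => //.
      exact: (sub1v (M * F)%AS).
    by move/subvP; apply; apply: memv_img; rewrite DL memv_adjoin.
  have : (t @: (L * F) <= M * F)%VS.
    rewrite aimgM; apply: prodvS; last exact: gal_normal_in.
    rewrite DL img_adjoin1; apply/FadjoinP; split => //; exact: sub1v.
  by move/subvP; apply; apply: memv_img; rewrite DLF' memv_adjoin.
pose A := [set t : gal_of {:Om} | t alpha \in M].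
pose sa := undup (map (fun t : gal_of {:Om} => t alpha) (enum A)).
pose sg := undup (map (fun t : gal_of {:Om} => t gamma) (enum A)).
have rootsP (x y : Om) : root (minPoly 1%VS x) y ->
    exists2 t : gal_of {:Om}, t \in 'Gal({:Om} / 1%AS)%g & t x = y.
  by move=> ry; apply: normalField_root_minPoly; rewrite ?subvf ?memvf ?normalFieldf.
have rootG (x : Om) (t : gal_of {:Om}) : root (minPoly 1%VS x) (t x).
  by apply: root_minPoly_gal; rewrite ?subvf ?memvf ?allG.
have memsa y : (y \in sa) = (y \in M) && root (minPoly 1%VS alpha) y.
  rewrite mem_undup; apply/mapP/andP => [[t]|[yM ry]].
    by rewrite mem_enum inE => tA ->; split.
  have [t _ Dy] := rootsP _ _ ry.
  by exists t => //; rewrite mem_enum inE Dy.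
have memsg y : (y \in sg) = (y \in (M * F)%VS) && root (minPoly 1%VS gamma) y.
  rewrite mem_undup; apply/mapP/andP => [[t]|[yM ry]].
    by rewrite mem_enum inE -key => tA ->; split.
  have [t _ Dy] := rootsP _ _ ry.
  by exists t => //; rewrite mem_enum inE -key Dy.
have szsa : size sa = n.
  rewrite -ss; apply: perm_size; apply: uniq_perm; [exact: undup_uniq | exact: us |].
  by move=> y; rewrite memsa Hs.
exists sg; split; [exact: undup_uniq | | exact: memsg].
have cA := @fiber_count _ _ (fun t : gal_of {:Om} => t alpha) A
   #|'Gal({:Om} / <<1; alpha>>%AS)%g|.
have cG := @fiber_count _ _ (fun t : gal_of {:Om} => t gamma) A
   #|'Gal({:Om} / <<1; gamma>>%AS)%g|.
rewrite -/sa in cA; rewrite -/sg in cG.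
have {}cA : #|A| = (#|'Gal({:Om} / <<1; alpha>>%AS)%g| * n)%N.
  rewrite -szsa; apply: cA => t tA.
  rewrite -(card_rcoset _ t); congr #|pred_of_set _|; apply/setP => u.
  rewrite !inE -fiber_gal; case: eqP => [->|_]; rewrite ?andbF ?andbT //.
  by move: tA; rewrite inE.
have {}cG : #|A| = (#|'Gal({:Om} / <<1; gamma>>%AS)%g| * size sg)%N.
  apply: cG => t tA.
  rewrite -(card_rcoset _ t); congr #|pred_of_set _|; apply/setP => u.
  rewrite !inE -fiber_gal; case: eqP => [Hu|_]; rewrite ?andbF ?andbT //.
  by rewrite -key Hu key; move: tA; rewrite inE.
have dA := cardGal galO <<1; alpha>>%AS.
have dG := cardGal galO <<1; gamma>>%AS.
set a := #|'Gal({:Om} / <<1; alpha>>%AS)%g| in dA cA.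
set c := #|'Gal({:Om} / <<1; gamma>>%AS)%g| in dG cG.
have capL : (L :&: F)%VS = 1%VS.
  apply/eqP; rewrite eqEsubv; apply/andP; split; last exact: (sub1v (L :&: F)%AS).
  by rewrite -capM; apply: capvS (subv_trans sLM (sub_closure M)) (subvv F).
have ni := NI galO L gF.
rewrite capL dimv1 muln1 in ni.
rewrite /= -DL in dA; rewrite /= -DLF' ni in dG.
have ac : a = (c * \dim F)%N.
  apply/eqP; rewrite -(eqn_pmul2r (adim_gt0 L)) dA -dG; apply/eqP; ring.
have c_gt0 : (0 < c)%N by apply: cardG_gt0.
apply/eqP; rewrite -(eqn_pmul2l c_gt0) -cG cA ac; apply/eqP; ring.
Qed.
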